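(* Let $D$ be a strong digraph with $D\in\mathcal{LE}_2$. Then $2\leq \overrightarrow{\chi}(D)\leq 3$.
   Context: All digraphs are finite, without loops or multiple arcs. Paths and cycles are directed; the length of a path or cycle is its number of arcs. The dichromatic number $\overrightarrow{\chi}(D)$ is the least $k$ such that $V(D)$ can be partitioned into $k$ classes each inducing an acyclic subdigraph (one with no directed cycle; a pair of opposite arcs counts as a directed cycle of length 2). A digraph is strong if for every ordered pair of vertices $x,y$ there is a directed path from $x$ to $y$. For a subdigraph $H$ of a digraph $D$, an ear of $H$ in $D$ is either a directed path in $D$ whose two end vertices lie in $H$ and whose internal vertices do not lie in $H$, or a directed cycle in $D$ having exactly one vertex in $H$. An ear decomposition of a strong digraph $D$ is a sequence $(D_0,D_1,\ldots,D_k)$ of strong subdigraphs of $D$ such that $D_0$ is a directed cycle, $D_{j+1}=D_j\cup P_j$ where $P_j$ is an ear of $D_j$ in $D$ for every $j\in\{0,\ldots,k-1\}$, and $D_k=D$. For an integer $i\geq 1$, $\mathcal{LE}_i$ denotes the family of strong digraphs having an ear decomposition in which every ear has length at least $i$. *)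

(* Defs.v *)
From mathcomp Require Import all_boot.
From mathcomp Require Import boolp.
Set Implicit Arguments. Unset Strict Implicit. Unset Printing Implicit Defensive.

(* A digraph is a finite vertex type T with an arc relation e : rel T
   (no loops is imposed as irreflexive e in the theorem; multiple arcs are
   impossible by construction). *)

Section Digraphs.
Variables (T : finType) (e : rel T).

(* directed cycle of D, given by its cyclic vertex sequence;
   length = size c (>= 2, a 2-cycle is a pair of opposite arcs) *)
Definition dcycle (c : seq T) : bool := [&& uniq c, 1 < size c & cycle e c].

(* directed path of D with vertex sequence x :: p; length = size p *)
Definition dpath (x : T) (p : seq T) : bool := uniq (x :: p) && path e x p.

Definition strong : Prop := forall x y : T, connect e x y.

Definition acyclic_set (S : {set T}) : Prop :=
  forall c : seq T, dcycle c -> ~ {subset c <= S}.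

Definition dicolorable (k : nat) : Prop :=
  exists f : T -> 'I_k, forall i : 'I_k, acyclic_set [set x | f x == i].

Lemma dicolorable_card : dicolorable #|T|.
Proof.
exists (fun x => enum_rank x) => i c /and3P [Hu Hs _] Hsub.
case: c Hu Hs Hsub => [|a [|b c]] //= /andP [Ha _] _ Hsub.
have Ha' := Hsub a (mem_head _ _).
have Hb' : b \in [set x | enum_rank x == i] by apply: Hsub; rewrite !inE eqxx orbT.
move: Ha' Hb'; rewrite !inE => /eqP Ha' /eqP Hb'.
move: Ha; rewrite inE; suff -> : a = b by rewrite eqxx.
by apply: enum_rank_inj; rewrite Ha' Hb'.
Qed.

Lemma ex_dicolorable : exists k, `[< dicolorable k >].
Proof. by exists #|T|; apply/asboolP; exact: dicolorable_card. Qed.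

Definition dichromatic : nat := ex_minn ex_dicolorable.

Definition subdigraph := ({set T} * {set T * T})%type.

Definition whole : subdigraph := (setT, [set a | e a.1 a.2]).

Definition sub_union (H1 H2 : subdigraph) : subdigraph :=
  (H1.1 :|: H2.1, H1.2 :|: H2.2).

Definition strong_sub (H : subdigraph) : Prop :=
  forall x y, x \in H.1 -> y \in H.1 -> connect [rel u v | (u, v) \in H.2] x y.

Definition path_sub (x : T) (p : seq T) : subdigraph :=
  ([set v in x :: p], [set a in zip (x :: p) p]).

Definition cycle_sub (c : seq T) : subdigraph :=
  ([set v in c], [set a in zip c (rot 1 c)]).

Definition is_ear (H P : subdigraph) (len : nat) : Prop :=
  (exists (x : T) (p : seq T),
      [/\ dpath x p /\ 0 < size p, len = size p, P = path_sub x p,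
          x \in H.1 /\ last x p \in H.1 &
          forall v, v \in p -> v != last x p -> v \notin H.1])
  \/
  (exists c : seq T,
      [/\ dcycle c, len = size c, P = cycle_sub c &
          #|[set v in c] :&: H.1| = 1]).

(* D_j = D_0 ∪ P_0 ∪ ... ∪ P_{j-1} *)
Definition ear_stage (D0 : subdigraph) (Ps : seq subdigraph) (j : nat) :=
  foldl sub_union D0 (take j Ps).

Definition LE (i : nat) : Prop :=
  exists (c : seq T) (Ps : seq subdigraph),
    [/\ dcycle c,
        forall j, j < size Ps ->
          exists len, i <= len /\
            is_ear (ear_stage (cycle_sub c) Ps j) (nth whole Ps j) len,
        forall j, j <= size Ps -> strong_sub (ear_stage (cycle_sub c) Ps j) &
        ear_stage (cycle_sub c) Ps (size Ps) = whole].

End Digraphs.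

(* Main.v *)
Require Import Defs.
From mathcomp Require Import all_boot.
From mathcomp Require Import boolp.
Set Implicit Arguments. Unset Strict Implicit. Unset Printing Implicit Defensive.

Section Aux.
Variable T : finType.

Definition Inv (A : {set T * T}) (f : T -> bool) :=
  forall c : seq T, c != [::] -> (forall v, v \in c -> (prev c v, v) \in A) ->
  exists u, exists v, [/\ u \in c, v \in c & f u != f v].

Lemma ear_ext (V : {set T}) (A B : {set T * T}) f x r :
  (forall a, a \in A -> a.2 \in V) ->
  Inv A f -> x \notin r -> (forall v, v \in r -> v \notin V) ->
  (forall u v, (u, v) \in B -> (u \in r) || (v \in r)) ->
  (forall i u, i < size r -> (u, nth x r i) \in B -> u = nth x (x :: r) i) ->
  Inv (A :|: B) (fun v => if v \in r then ~~ f x else f v).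
Proof.
move=> AV HA xr rV H1 H2 c c0 Hc.
case: (boolP (has (mem r) c)) => [/hasP [w wc wr] | /hasPn hn].
  have xc : x \in c.
    have: forall i, i < size r -> nth x r i \in c -> x \in c.
      elim=> [|i IH] Hi Hin.
        have := Hc _ Hin; rewrite in_setU => /orP [/AV|].
          by rewrite (negbTE (rV _ (mem_nth _ Hi))).
        by move/(H2 _ _ Hi) => /= <-; rewrite mem_prev.
      have := Hc _ Hin; rewrite in_setU => /orP [/AV|].
        by rewrite (negbTE (rV _ (mem_nth _ Hi))).
      move/(H2 _ _ Hi) => /= Hp; apply: (IH (ltnW Hi)).
      by rewrite -Hp mem_prev.
    move=> /(_ (index w r)); rewrite index_mem nth_index //; by apply.
  have wr' : w \in r := wr.
  exists x, w; split => //; rewrite (negbTE xr) wr'.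
  by case: (f x).
have {}hn : forall v, v \in c -> v \notin r := hn.
have [] := HA c c0.
  move=> v vc; have := Hc _ vc; rewrite in_setU => /orP [//|/H1].
  by rewrite (negbTE (hn _ vc)) orbF => Hp; move: (hn (prev c v)); rewrite mem_prev vc Hp => /(_ isT).
move=> u [v [uc vc Hne]]; exists u, v; split => //.
by rewrite (negbTE (hn _ uc)) (negbTE (hn _ vc)).
Qed.

Lemma mem_zip2 (s t : seq T) (a : T * T) : a \in zip s t -> a.2 \in t.
Proof.
elim: s t => [|x s IH] [|y t] //=; rewrite in_cons => /orP [/eqP -> |/IH];
  by rewrite in_cons ?eqxx // => ->; rewrite orbT.
Qed.

Lemma zip_touch (x : T) r y u v : r != [::] ->
  (u, v) \in zip (x :: r) (rcons r y) -> (u \in r) || (v \in r).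
Proof.
elim: r x => [|a r IH] x // _ /=; rewrite in_cons => /orP [/eqP [_ ->]|].
  by rewrite mem_head orbT.
case: r IH => [|b r] IH.
  by rewrite /= mem_seq1 => /eqP [-> _]; rewrite mem_head.
move/IH => /(_ isT) /orP [] H; apply/orP; [left|right]; by rewrite in_cons H orbT.
Qed.

Lemma zip_back (x : T) r y u i : uniq (rcons r y) -> i < size r ->
  (u, nth x r i) \in zip (x :: r) (rcons r y) -> u = nth x (x :: r) i.
Proof.
move=> Hu Hi /(nthP (x, x)) [j]; rewrite size_zip /= size_rcons minnn => Hj.
rewrite nth_zip /=; last by rewrite size_rcons.
case=> Hju Hjv.
have Hi' : i < size (rcons r y) by rewrite size_rcons ltnW.
have Hj' : j < size (rcons r y) by rewrite size_rcons.
have : nth x (rcons r y) j == nth x (rcons r y) i by rewrite Hjv nth_rcons Hi.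
rewrite nth_uniq // => /eqP Hji; subst j.
by rewrite -Hju.
Qed.

Lemma zip_rot1 (s t : seq T) : size s = size t ->
  zip (rot 1 s) (rot 1 t) = rot 1 (zip s t).
Proof.
case: s t => [|x s] [|y t] //= [Hs].
by rewrite !rot1_cons zip_rcons.
Qed.

Lemma zip_rot k (s t : seq T) : size s = size t -> k <= size s ->
  zip (rot k s) (rot k t) = rot k (zip s t).
Proof.
move=> Hst; elim: k => [|k IH] Hk; first by rewrite !rot0.
have Hk' : 1 + k <= size s by [].
rewrite -add1n !rotD //; last by rewrite -Hst.
  by rewrite zip_rot1 ?size_rot // IH // ltnW.
by rewrite size_zip -Hst minnn.
Qed.

Definition WF (H : subdigraph T) := forall a, a \in H.2 -> a.2 \in H.1.

Lemma cycle_case (e : rel T) (V : {set T}) (A : {set T * T}) f c :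
  (forall a, a \in A -> a.2 \in V) -> Inv A f -> dcycle e c ->
  #|[set v in c] :&: V| = 1 ->
  exists f', Inv (A :|: (cycle_sub c).2) f'.
Proof.
move=> AV HA /and3P [Hu Hs _] /eqP /cards1P [x Hx].
have : x \in [set v in c] :&: V by rewrite Hx set11.
rewrite !inE => /andP [xc xV].
have Hk : index x c < size c by rewrite index_mem.
set r := drop (index x c).+1 c ++ take (index x c) c.
have Hc' : rot (index x c) c = x :: r by rewrite rot_index.
have Hmem : forall a, (a \in zip c (rot 1 c)) = (a \in zip (x :: r) (rcons r x)).
  move=> a; rewrite -rot1_cons -Hc'.
  have -> : rot 1 (rot (index x c) c) = rot (index x c) (rot 1 c).
    by rewrite -rotD ?add1n // -rotD ?size_rot addnC ?addn1.
  by rewrite zip_rot ?size_rot // ?mem_rot // ltnW.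
have Hu' : uniq (x :: r) by rewrite -Hc' rot_uniq.
have rc : forall v, v \in r -> v \in c.
  by move=> v vr; rewrite -(mem_rot (index x c)) Hc' in_cons vr orbT.
have rne : r != [::].
  apply/eqP => r0; move: Hs; rewrite -(size_rot (index x c)) Hc' r0.
  by [].
eexists; apply: (ear_ext AV HA (x := x) (r := r)).
- by move: Hu' => /andP [].
- move=> v vr; apply/negP => vV.
  have : v \in [set x] by rewrite -Hx !inE rc.
  rewrite inE => /eqP vx; by move: Hu'; rewrite -vx /= vr.
- move=> u v; rewrite inE Hmem; exact: zip_touch.
- move=> i u Hi; rewrite inE Hmem; apply: zip_back => //.
  by rewrite -rot1_cons rot_uniq.
Qed.


Lemma zip_rcons_l (s t : seq T) a : size s = size t -> zip (rcons s a) t = zip s t.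
Proof. by elim: s t => [|x s IH] [|y t] //= [/IH ->]. Qed.

Lemma path_case (e : rel T) (V : {set T}) (A : {set T * T}) f x p :
  (forall a, a \in A -> a.2 \in V) -> Inv A f -> dpath e x p -> 1 < size p ->
  (forall v, v \in p -> v != last x p -> v \notin V) ->
  exists f', Inv (A :|: (path_sub x p).2) f'.
Proof.
move=> AV HA; case/lastP: p => [|r y] //; rewrite last_rcons size_rcons.
case/andP => Hu _ Hs Hin.
move: (Hu) => /= /andP [xr Hu2].
move: (Hu2); rewrite rcons_uniq => /andP [yr _].
have Ez : zip (x :: rcons r y) (rcons r y) = zip (x :: r) (rcons r y).
  by rewrite -rcons_cons zip_rcons_l // size_rcons.
eexists; apply: (ear_ext AV HA (x := x) (r := r)).
- by apply/negP => xr'; move: xr; rewrite mem_rcons in_cons xr' orbT.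
- move=> v vr; apply: Hin; first by rewrite mem_rcons in_cons vr orbT.
  by apply/eqP => vy; move: yr; rewrite -vy vr.
- move=> u v; rewrite /= inE Ez; apply: zip_touch.
  by case: r Hs {Hin xr Hu Hu2 yr Ez}.
- move=> i u Hi; rewrite /= inE Ez; exact: zip_back.
Qed.

Lemma WF_union H1 H2 : WF H1 -> WF H2 -> WF (sub_union H1 H2).
Proof.
move=> W1 W2 a; rewrite /sub_union /= !in_setU => /orP [/W1|/W2] ->; by rewrite ?orbT.
Qed.

Lemma WF_path x p : WF (path_sub x p).
Proof.
move=> a; rewrite /path_sub /= !inE => /mem_zip2 H.
by rewrite H orbT.
Qed.

Lemma WF_cycle c : WF (cycle_sub c).
Proof.
by move=> a; rewrite /cycle_sub /= !inE => /mem_zip2; rewrite mem_rot.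
Qed.

End Aux.

Theorem mainTheorem15 (T : finType) (e : rel T) :
  irreflexive e -> strong e -> LE e 2 -> 2 <= dichromatic e <= 3.
Proof.
move=> _ _ [c0 [Ps [Hc0 Hear _ Hwh]]].
set st := ear_stage (cycle_sub c0) Ps in Hear Hwh.
have stS : forall j, j < size Ps ->
    st j.+1 = sub_union (st j) (nth (whole e) Ps j).
  by move=> j Hj; rewrite /st /ear_stage (take_nth (whole e)) // foldl_rcons.
have key : forall j, j <= size Ps -> WF (st j) /\ exists f, Inv (st j).2 f.
  elim=> [|j IH] Hj.
    have -> : st 0 = cycle_sub c0 by rewrite /st /ear_stage take0.
    split; first exact: WF_cycle.
    case: c0 Hc0 {Hear Hwh st stS} => [|x0 s] // Hc0.
    have A0 : forall a, a \in (set0 : {set T * T}) -> a.2 \in [set x0] by move=> a; rewrite in_set0.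
    have I0 : Inv (set0 : {set T * T}) xpred0.
      move=> [|v c] // _ /(_ v (mem_head _ _)); by rewrite inE.
    have C0 : #|[set v in x0 :: s] :&: [set x0]| = 1.
      apply/eqP/cards1P; exists x0; apply/setP => v; rewrite !inE.
      by case: (v =P x0) => [->|_]; rewrite ?eqxx ?andbF.
    have [f Hf] := cycle_case A0 I0 Hc0 C0.
    by exists f; rewrite set0U in Hf.
  have Hj' : j < size Ps by [].
  have [W [f Hf]] := IH (ltnW Hj).
  rewrite stS //; have [len [Hlen [[x [p [[Hp _] Hl HP [xH lH] Hin]]]|[c [Hc Hl HP Hcard]]]]] := Hear j Hj'.
  - split; first by rewrite HP; apply: WF_union => //; exact: WF_path.
    have Hs : 1 < size p by rewrite -Hl.
    have [f' Hf'] := path_case (V := (st j).1) W Hf Hp Hs Hin.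
    by exists f'; rewrite HP.
  - split; first by rewrite HP; apply: WF_union => //; exact: WF_cycle.
    have [f' Hf'] := cycle_case W Hf Hc Hcard.
    by exists f'; rewrite HP.
have [_ [f Hf]] := key _ (leqnn _).
rewrite Hwh in Hf.
rewrite /dichromatic; case: ex_minnP => m /asboolP Hm Hmin.
apply/andP; split.
  case: m Hm {Hmin} => [|[|m]] // [g Hg].
    case: c0 Hc0 {Hear Hwh st stS key Hf} => [|x0 s] //.
    by case: (g x0).
  exfalso; apply: (Hg ord0 c0 Hc0) => v _; rewrite inE; apply/eqP/val_inj.
  by case: (g v) => [[|n]].
apply: (@leq_trans 2) => //; apply: Hmin; apply/asboolP.
exists (fun v => if f v then ord_max else ord0) => i c /and3P [Hu Hs Hcy] Hsub.
have [] := Hf c.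
- by case: c Hs {Hu Hcy Hsub}.
- by move=> v vc; rewrite inE /=; exact: prev_cycle.
move=> u [v [uc vc Hne]].
move: (Hsub u uc) (Hsub v vc); rewrite !inE.
by case: (f u) (f v) Hne => [] [] //= _ /eqP <- /eqP /(congr1 val).
Qed.
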